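(* Let $X$ be a real Banach space, $Y$ a (closed linear) subspace of $X$, $N\in\mathbb{N}$, and $f:[0,\infty)^N\to[0,\infty)$ a convex monotone function. Then the map $\mathrm{rad}_Y^f:(\mathcal{F}_N(X),d)\to[0,\infty)$ is Lipschitz continuous on bounded subsets of $\mathcal{F}_N(X)$.
   Context: $\mathcal{F}_N(X)$ is the set of subsets of $X$ of cardinality $N$, each written (with a fixed enumeration) as $\{x_1,\dots,x_N\}$, with the metric $d(F_1,F_2)=\max_{1\le i\le N}\|x_i-x_i'\|$ for $F_1=\{x_1,\dots,x_N\}$, $F_2=\{x_1',\dots,x_N'\}$. $f$ is monotone if $a\le b$ coordinatewise implies $f(a)\le f(b)$. For $F=\{x_1,\dots,x_N\}$, $r_f(y,F)=f(\|y-x_1\|,\dots,\|y-x_N\|)$ and $\mathrm{rad}_Y^f(F)=\inf_{y\in Y}r_f(y,F)$. *)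

(* Defs.v *)
From HB Require Import structures.
From mathcomp Require Import all_boot all_order all_algebra.
From mathcomp Require Import all_classical all_reals all_analysis.
Set Implicit Arguments. Unset Strict Implicit. Unset Printing Implicit Defensive.
Import Order.TTheory GRing.Theory Num.Theory.
Import numFieldNormedType.Exports.
Local Open Scope classical_set_scope.
Local Open Scope ring_scope.

(* An element of F_N(X): an N-element subset of X with its fixed enumeration,
   i.e. an injective map 'I_N -> X. *)
Definition FN (R : realType) (X : normedModType R) (N : nat) : Type :=
  {F : 'I_N -> X | injective F}.

Definition dFN (R : realType) (X : normedModType R) (N : nat)
  (F1 F2 : FN X N) : R :=
  \big[Num.max/0]_(i < N) `|proj1_sig F1 i - proj1_sig F2 i|.

Definition closed_subspace (R : realType) (X : normedModType R) (Y : set X) : Prop :=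
  closed Y /\ Y 0 /\ (forall (a : R) (x y : X), Y x -> Y y -> Y (a *: x + y)).

Definition nonneg_vec (R : realType) (N : nat) (a : 'I_N -> R) : Prop :=
  forall i, 0 <= a i.

Definition nonneg_valued (R : realType) (N : nat) (f : ('I_N -> R) -> R) : Prop :=
  forall a, nonneg_vec a -> 0 <= f a.

Definition convex_on_orthant (R : realType) (N : nat) (f : ('I_N -> R) -> R) : Prop :=
  forall a b (t : R), nonneg_vec a -> nonneg_vec b -> 0 <= t <= 1 ->
    f (fun i => t * a i + (1 - t) * b i) <= t * f a + (1 - t) * f b.

Definition monotone_on_orthant (R : realType) (N : nat) (f : ('I_N -> R) -> R) : Prop :=
  forall a b, nonneg_vec a -> nonneg_vec b -> (forall i, a i <= b i) -> f a <= f b.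

Definition r_f (R : realType) (X : normedModType R) (N : nat)
  (f : ('I_N -> R) -> R) (y : X) (F : FN X N) : R :=
  f (fun i => `|y - proj1_sig F i|).

Definition radYf (R : realType) (X : normedModType R) (N : nat)
  (f : ('I_N -> R) -> R) (Y : set X) (F : FN X N) : R :=
  inf [set r_f f y F | y in Y].

Definition bounded_FN (R : realType) (X : normedModType R) (N : nat)
  (B : set (FN X N)) : Prop :=
  exists (F0 : FN X N) (M : R), forall F, B F -> dFN F F0 <= M.

(* Main.v *)
Require Import Defs.
From HB Require Import structures.
From mathcomp Require Import all_boot all_order all_algebra.
From mathcomp Require Import all_classical all_reals all_analysis.
From mathcomp Require Import lra.
Import Order.TTheory GRing.Theory Num.Theory.
Import numFieldNormedType.Exports.
Local Open Scope classical_set_scope.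
Local Open Scope ring_scope.

Lemma dFN_ge {R : realType} {X : normedModType R} {N : nat} (F1 F2 : FN X N) i :
  `|proj1_sig F1 i - proj1_sig F2 i| <= dFN F1 F2.
Proof. rewrite /dFN; exact: (le_bigmax _ (fun i => `|proj1_sig F1 i - proj1_sig F2 i|) i). Qed.

Lemma bigmax_ge0 {R : realType} {N : nat} (a : 'I_N -> R) :
  (forall i, 0 <= a i) -> 0 <= \big[Num.max/0]_(i < N) a i.
Proof.
move=> ha; elim/big_ind: _ => //= x y hx hy; rewrite le_max hx //.
Qed.

Lemma dFN_ge0 {R : realType} {X : normedModType R} {N : nat} (F1 F2 : FN X N) :
  0 <= dFN F1 F2.
Proof. by apply: bigmax_ge0 => i. Qed.

Lemma dFN_sym {R : realType} {X : normedModType R} {N : nat} (F1 F2 : FN X N) :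
  dFN F1 F2 = dFN F2 F1.
Proof. rewrite /dFN; apply: eq_bigr => i _; exact: distrC. Qed.

Theorem proposition4p3 (R : realType) (X : completeNormedModType R)
  (Y : set X) (N : nat) (f : ('I_N -> R) -> R) :
  closed_subspace Y ->
  nonneg_valued f -> convex_on_orthant f -> monotone_on_orthant f ->
  forall B : set (FN X N), bounded_FN B ->
  exists L : R, forall F1 F2 : FN X N, B F1 -> B F2 ->
    `|radYf f Y F1 - radYf f Y F2| <= L * dFN F1 F2.
Proof.
move=> [_ [Y0 _]] f0 fconv fmono B [F0 [M HM]].
have mono : forall a b, nonneg_vec a -> (forall i, a i <= b i) -> f a <= f b.
  move=> a b ha hab; apply: fmono => // i; exact: le_trans (ha i) (hab i).
set g := fun t : R => f (fun _ => t).
set R0 := `|M| + \big[Num.max/0]_(i < N) `|proj1_sig F0 i|.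
have R0ge0 : 0 <= R0 by apply: addr_ge0 => //; by apply: bigmax_ge0 => i.
have bndB : forall F i, B F -> `|proj1_sig F i| <= R0.
  move=> F i BF.
  have h1 : `|proj1_sig F i| <= `|proj1_sig F i - proj1_sig F0 i| + `|proj1_sig F0 i|.
    by rewrite -{1}(subrK (proj1_sig F0 i) (proj1_sig F i)) ler_normD.
  have h2 := dFN_ge F F0 i.
  have h3 := HM F BF.
  have h4 : `|proj1_sig F0 i| <= \big[Num.max/0]_(i < N) `|proj1_sig F0 i|.
    exact: (le_bigmax _ (fun i => `|proj1_sig F0 i|) i).
  have h5 : M <= `|M| by exact: ler_norm.
  rewrite /R0; lra.
have hlb : forall F, has_lbound [set r_f f y F | y in Y].
  move=> F; exists 0 => _ [y _ <-]; apply: f0 => i //.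
have hne : forall F, [set r_f f y F | y in Y] !=set0.
  by move=> F; exists (r_f f 0 F); exists 0.
have rad_le : forall F y, Y y -> radYf f Y F <= r_f f y F.
  by move=> F y Yy; apply: (ge_inf (hlb F)); exists y.
have rad_ge0 : forall F, 0 <= radYf f Y F.
  by move=> F; apply: lb_le_inf => // _ [y _ <-]; apply: f0 => i.
have rad_adh : forall F eps, 0 < eps -> exists2 y, Y y & r_f f y F < radYf f Y F + eps.
  move=> F eps he; have [_ [y Yy <-] hy] := inf_adherent he (conj (hne F) (hlb F)).
  by exists y.
have rad_B : forall F, B F -> radYf f Y F <= g R0.
  move=> F BF; apply: le_trans (rad_le F 0 Y0) _; rewrite /r_f /g.
  apply: mono => [i //|i]; rewrite sub0r normrN; exact: bndB.
set c := g R0 + 1.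
have gR0 : 0 <= g R0 by apply: f0 => i.
have [C [C0 HC]] : exists C, 0 <= C /\ forall F y, B F -> Y y -> r_f f y F <= c ->
    f (fun i => `|y - proj1_sig F i| + 1) <= C.
  case: (pselect (exists T, 0 <= T /\ c < g T)) => [[T [T0 HT]]|nT].
    exists (g (T + R0 + R0 + 1)); split; first by apply: f0 => i; lra.
    move=> F y BF Yy hr.
    have hy : `|y| < T + R0.
      rewrite ltNge; apply/negP => hy.
      have : g T <= r_f f y F.
        apply: mono => [i //|i].
        have h1 : `|y| <= `|y - proj1_sig F i| + `|proj1_sig F i|.
          by rewrite -{1}(subrK (proj1_sig F i) y) ler_normD.
        have := bndB F i BF; lra.
      lra.
    apply: mono => [i|i]; first by have := normr_ge0 (y - proj1_sig F i); lra.
    have := ler_normB y (proj1_sig F i); have := bndB F i BF; lra.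
  have gT : forall T, 0 <= T -> g T <= c.
    move=> T T0; rewrite leNgt; apply/negP => hT; apply: nT; by exists T.
  exists c; split; first by rewrite /c; lra.
  move=> F y BF Yy hr; apply: le_trans (gT (`|y| + R0 + 1) _); last first.
    by have := normr_ge0 y; lra.
  apply: mono => [i|i]; first by have := normr_ge0 (y - proj1_sig F i); lra.
  have := ler_normB y (proj1_sig F i); have := bndB F i BF; lra.
have one : forall F1 F2, B F1 -> B F2 ->
    radYf f Y F1 <= radYf f Y F2 + (c + C) * dFN F1 F2.
  move=> F1 F2 B1 B2.
  have d0 := dFN_ge0 F1 F2.
  have r1 := rad_B F1 B1; have r2 := rad_ge0 F2; have r2' := rad_B F2 B2.
  case: (leP (dFN F1 F2) 1) => hd.
  2:{ have hc : c <= c * dFN F1 F2 by rewrite ler_peMr // /c; lra.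
      have hCd : 0 <= C * dFN F1 F2 by apply: mulr_ge0.
      rewrite mulrDl; rewrite /c in hc *; lra. }
  apply/ler_addgt0Pr => eps eps0.
  have e0 : 0 < Num.min eps 1 by rewrite lt_min eps0 ltr01.
  have [y Yy hy] := rad_adh F2 _ e0.
  have e1 : Num.min eps 1 <= eps by rewrite ge_min lexx.
  have e2 : Num.min eps 1 <= 1 by rewrite ge_min lexx orbT.
  have hrc : r_f f y F2 <= c by rewrite /c; lra.
  have hC := HC F2 y B2 Yy hrc.
  set a := fun i => `|y - proj1_sig F2 i|.
  have a0 : nonneg_vec a by move=> i; exact: normr_ge0.
  have a1 : nonneg_vec (fun i => a i + 1) by move=> i; have := a0 i; lra.
  have hcv := fconv (fun i => a i + 1) a (dFN F1 F2) a1 a0 (introT andP (conj d0 hd)).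
  have : r_f f y F1 <= f (fun i => dFN F1 F2 * (a i + 1) + (1 - dFN F1 F2) * a i).
    apply: mono => [i|i]; first exact: normr_ge0.
    have := ler_distD (proj1_sig F2 i) y (proj1_sig F1 i).
    have := dFN_ge F2 F1 i; rewrite dFN_sym /a; lra.
  have hfa : 0 <= f a by apply: f0.
  have := rad_le F1 y Yy.
  rewrite /r_f -/(a) in hy hC *.
  have hC' : f (fun i => a i + 1) <= C by [].
  move=> h1 h2.
  have p1 : dFN F1 F2 * f (fun i => a i + 1) <= dFN F1 F2 * C by apply: ler_wpM2l.
  have p2 : 0 <= dFN F1 F2 * f a by apply: mulr_ge0.
  have p3 : 0 <= c * dFN F1 F2 by apply: mulr_ge0 => //; rewrite /c; lra.
  rewrite mulrDl; lra.
exists (c + C) => F1 F2 B1 B2.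
rewrite ler_norml; have h1 := one F1 F2 B1 B2; have h2 := one F2 F1 B2 B1.
rewrite dFN_sym in h2; apply/andP; split; lra.
Qed.
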